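(* Let $\beta\in(0,\tfrac12)$ and let $u:\mathbb{T}_m\to\mathbb{R}$ be an eigenfunction associated with $\lambda_1(\beta)$ such that $u(\emptyset)=1$, $u$ is constant on each level and strictly decreasing with respect to the level. Writing $u_k$ for the common value of $u$ on level $k$, we have $$\liminf_{k\to\infty}\frac{u_k-u_{k+1}}{p_\beta^k}\ge\lambda_1(\beta).$$
   Context: Tree: for an integer $m\ge2$, $\mathbb{T}_m$ has vertices the root $\emptyset$ and all finite sequences $(\emptyset,a_1,\dots,a_k)$, $a_i\in\{0,\dots,m-1\}$; $|x|$ is the level, successors of $x$ are $(x,i)$, $\hat x$ is the immediate predecessor of $x\ne\emptyset$. A branch is an infinite sequence $(x_n)_{n\ge0}$ with $x_0=\emptyset$, $x_{n+1}$ a successor of $x_n$; $\lim_{x\to y}u(x)=\lim_n u(x_n)$ for a branch $y=(x_n)$. Operator: $p_\beta=\beta/(1-\beta)$ for $\beta\in(0,1)$. $\Delta_\beta u(\emptyset)=\frac1m\sum_{i=0}^{m-1}u(\emptyset,i)-u(\emptyset)$ and, for $x\ne\emptyset$, $\Delta_\beta u(x)=\big(\beta u(\hat x)+\frac{1-\beta}{m}\sum_{i=0}^{m-1}u(x,i)-u(x)\big)p_\beta^{-|x|}$. Eigenfunction for $\lambda$: a bounded $u\not\equiv0$ with $-\Delta_\beta u=\lambda u$ on $\mathbb{T}_m$ and $\lim_{x\to y}u(x)=0$ for every branch $y$. $\mathcal{A}_\beta=\{\lambda>0:\exists v:\mathbb{T}_m\to\mathbb{R}\text{ and constants }0<c<C\text{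 with } c<v<C \text{ and } \Delta_\beta v+\lambda v\le0 \text{ on }\mathbb{T}_m\}$, $\lambda_1(\beta)=\sup\mathcal{A}_\beta$. *)

(* Defs.v *)
From HB Require Import structures.
From mathcomp Require Import all_boot all_order all_algebra.
From mathcomp Require Import all_classical all_reals all_analysis.
Set Implicit Arguments. Unset Strict Implicit. Unset Printing Implicit Defensive.
Import Order.TTheory GRing.Theory Num.Theory.
Import numFieldNormedType.Exports.
Local Open Scope classical_set_scope.
Local Open Scope ring_scope.

(* Vertices of T_m: the vertex (root, a_1, ..., a_k) is encoded by the list
   [:: a_k; ...; a_1] : seq 'I_m (most recent digit first).
   Root = [::], level |x| = size x, successor (x,i) = i :: x,
   predecessor of a :: x is x. *)
Definition vertex (m : nat) := seq 'I_m.

Definition p_beta (R : realType) (beta : R) : R := beta / (1 - beta).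

Definition Delta (R : realType) (m : nat) (beta : R) (u : vertex m -> R)
  (x : vertex m) : R :=
  match x with
  | [::] => (m%:R)^-1 * (\sum_(i < m) u [:: i]) - u [::]
  | _ :: xh =>
      (beta * u xh + (1 - beta) / m%:R * (\sum_(i < m) u (i :: x)) - u x)
        / (p_beta beta ^+ size x)
  end.

Definition is_branch (m : nat) (b : nat -> vertex m) : Prop :=
  b 0%N = [::] /\ forall n, exists i : 'I_m, b n.+1 = i :: b n.

Definition eigenfunction (R : realType) (m : nat) (beta lambda : R)
  (u : vertex m -> R) : Prop :=
  (exists M : R, forall x, `|u x| <= M) /\
  (exists x, u x != 0) /\
  (forall x, - Delta beta u x = lambda * u x) /\
  (forall b, is_branch b -> (fun n => u (b n)) @ \oo --> (0 : R)).

Definition A_beta (R : realType) (m : nat) (beta : R) : set R :=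
  [set lambda | 0 < lambda /\
     exists (v : vertex m -> R) (c C : R), 0 < c /\ c < C /\
       forall x, c < v x < C /\ Delta beta v x + lambda * v x <= 0].

Definition lambda1 (R : realType) (m : nat) (beta : R) : \bar R :=
  ereal_sup [set x%:E | x in A_beta m beta].

(* Main.v *)
Require Import Defs.
From HB Require Import structures.
From mathcomp Require Import all_boot all_order all_algebra.
From mathcomp Require Import all_classical all_reals all_analysis.
From mathcomp Require Import lra ring.
Import Order.TTheory GRing.Theory Num.Theory.
Import numFieldNormedType.Exports.
Local Open Scope classical_set_scope.
Local Open Scope ring_scope.

Theorem lemma5p10 (R : realType) (m : nat) (hm : (2 <= m)%N) (beta : R)
  (hb0 : 0 < beta) (hb1 : beta < 1 / 2)
  (u : vertex m -> R) (uk : nat -> R)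
  (hlam : exists l : R, lambda1 m beta = l%:E /\ eigenfunction beta l u)
  (hroot : u [::] = 1)
  (hlevel : forall x, u x = uk (size x))
  (hdecr : forall k, uk k.+1 < uk k) :
  (lambda1 m beta <=
   limn_einf (fun k => ((uk k - uk k.+1) / p_beta beta ^+ k)%:E))%E.
Proof.
have [l [-> [_ [_ [heq hbr]]]]] := hlam.
have m0 : (0 < m)%N by apply: leq_trans hm.
pose o : 'I_m := Ordinal m0.
have mR : (m%:R : R) != 0 by rewrite pnatr_eq0 -lt0n.
have b1p : 0 < 1 - beta by lra.
have b1 : 1 - beta != 0 by rewrite gt_eqF.
have pp : 0 < p_beta beta by rewrite /p_beta divr_gt0.
have sumE : forall x : vertex m, \sum_(i < m) u (i :: x) = m%:R * uk (size x).+1.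
  move=> x; under eq_bigr => i _ do rewrite hlevel /=.
  by rewrite sumr_const card_ord mulr_natl.
have uk_ge0 : forall k, 0 <= uk k.
  have hb : is_branch (fun n => nseq n o) by split => // n; exists o.
  have cv := hbr _ hb.
  have cv' : uk n @[n --> \oo] --> (0:R).
    by apply: cvg_trans cv; apply: near_eq_cvg; near=> n; rewrite hlevel size_nseq.
  move=> k.
  have hom : {homo uk : n m / (n <= m)%N >-> (m <= n)%R}.
    by apply/nonincreasing_seqP => n; apply/ltW.
  have := nonincreasing_cvgn_ge hom (cvgP _ cv') k.
  by rewrite (cvg_lim _ cv').
have l0 : l = uk 0%N - uk 1%N.
  have := heq [::]; rewrite /Delta sumE /= hroot mulrA mulVf // mul1r.
  rewrite -(hlevel [::]) hroot; lra.
pose e k := (uk k - uk k.+1) / p_beta beta ^+ k.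
have step : forall k, e k <= e k.+1.
  move=> k; have := heq (o :: nseq k o).
  rewrite /Delta sumE !hlevel /= size_nseq => H.
  have P0 : p_beta beta ^+ k != 0 by rewrite expf_neq0 // gt_eqF.
  have pk : 0 < p_beta beta ^+ k by rewrite exprn_gt0.
  set P := p_beta beta ^+ k in P0 pk.
  set a := uk k in H *; set b := uk k.+1 in H *; set c := uk k.+2 in H *.
  have hb_ : 0 <= b by apply: uk_ge0.
  have l_ : 0 <= l by rewrite l0; have := hdecr 0%N; lra.
  rewrite /e exprS -/P -/a -/b -/c.
  have H' : beta * a + (1 - beta) * c - b = - (l * b) * (p_beta beta * P).
    rewrite -H exprS -/P opprK divfK; last by rewrite mulf_neq0 // gt_eqF.
    by rewrite mulrA divfK.
  have cE : c = (b - beta * a - l * b * (p_beta beta * P)) / (1 - beta).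
    apply: (mulIf b1); rewrite divfK //; lra.
  have key : (b - c) / (p_beta beta * P) = (a - b) / P + l * b / (1 - beta).
    rewrite cE /p_beta; field; rewrite ?P0 ?b1 ?(gt_eqF hb0) //.
  rewrite key lerDl divr_ge0 //; [exact: mulr_ge0 | exact: ltW].
have ge : forall k, l <= e k.
  elim=> [|k IH]; first by rewrite /e expr0 divr1 l0.
  exact: le_trans IH (step k).
rewrite limn_einf_lim; apply: lime_ge; first exact: is_cvg_einfs.
apply: nearW => n; apply: le_ereal_inf_tmp => _ [k _ <-].
by rewrite lee_fin; apply: ge.
Unshelve. all: by end_near.
Qed.
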